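(* Let $M$ be a $d$-dimensional victim GNN whose embeddings $\mathbf{h}_i(G,X;M)$ are twice-differentiable in $X$ with bounded Hessian and satisfy $0<\underline{\alpha}_M\le\|\mathbf{h}_i\|\le\overline{\alpha}_M$ for all feasible $G,X,i$. Let $M'$ be a surrogate of $M$ with reconstruction error $\epsilon$ and transformation $\phi$, where $\phi(\mathbf{0})=\mathbf{0}$ and there are positive constants $c,C$ with $c\|\mathbf{v}_1-\mathbf{v}_2\|\le\|\phi(\mathbf{v}_1)-\phi(\mathbf{v}_2)\|\le C\|\mathbf{v}_1-\mathbf{v}_2\|$ for all $\mathbf{v}_1,\mathbf{v}_2\in\mathbb{R}^d$. Then for $\delta$ small enough and any such surrogate $M'$ with $\epsilon=o(\delta)$, $\beta_{M'}=O\big((C/c)^2\cdot\max(\epsilon/\delta,\delta)\big)$.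
   Context: A graph is $(G,X)$, $G=(V,E)$ with $n$ nodes, features $\mathbf{x}_i\in\mathbb{R}^D$, $X=(\mathbf{x}_1,\dots,\mathbf{x}_n)$; $\mathcal{D}$ is a distribution over feasible $(G,X)$. A $d$-dimensional GNN $F$ maps $(G,X)$ to node embeddings $\mathbf{h}_i(G,X;F)\in\mathbb{R}^d$. Surrogate: a $d'$-dimensional GNN $M'$ with embeddings $\mathbf{h}_i'$ is a surrogate of $M$ (with error $\epsilon$, transformation $\phi$) if there exist $\phi:\mathbb{R}^d\to\mathbb{R}^{d'}$ and a map $\hat{\mathbf{h}}$ assigning vectors $\hat{\mathbf{h}}_i(G,X)\in\mathbb{R}^d$ such that $\sup_{G,X,i}\|\hat{\mathbf{h}}_i(G,X)-\mathbf{h}_i(G,X;M)\|\le\epsilon$ and $\mathbf{h}_i'=\phi(\hat{\mathbf{h}}_i)$, for every graph that is feasible or within a $\delta$-neighborhood of a feasible graph. Query tuples: $\mathcal{Q}=\{(G,X,i,\mathbf{w}) : (G,X)\in\mathrm{supp}(\mathcal{D}), i\in\{1,\dots,n\},\|\mathbf{w}\|=1\}$. $\mathbf{h}_i^{(\tau\mathbf{w})}(G,X;F)$ is the embedding of node $i$ after replacing $\mathbf{x}_i$ by $\mathbf{x}_i+\tau\mathbf{w}$; $\nabla_{\mathbf{w}}\mathbf{h}_i=\lim_{\tau\to0}(\mathbf{h}_i^{(\tau\mathbf{w})}-\mathbf{h}_i)/\tau$; stationary points $\mathcal{S}(F)=\{t\in\mathcal{Q}:\|\nabla_{\mathbf{w}}\mathbf{h}_i(G,X;F)\|=0\}$.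 $\mu_M$ is a probability measure on $\mathcal{S}(M)$. $\mathcal{D}_{\exp}$: $(G,X)\sim\mathcal{D}$, $i$ uniform on $\{1,\dots,n\}$, $\mathbf{w}$ uniform on the unit sphere. For $t\in\mathcal{Q}$: $q_F(t)=\|\mathbf{h}_i^{(\delta\mathbf{w})}(G,X;F)-\mathbf{h}_i(G,X;F)\|/\|\mathbf{h}_i(G,X;F)\|$ and $\beta_F=\mathbb{E}_{t\sim\mu_M}q_F(t)/\mathbb{E}_{t\sim\mathcal{D}_{\exp}}q_F(t)$. *)

(* Defs.v *)
From HB Require Import structures.
From mathcomp Require Import all_boot all_order all_algebra.
From mathcomp Require Import all_classical all_reals all_analysis.
Set Implicit Arguments. Unset Strict Implicit. Unset Printing Implicit Defensive.
Import Order.TTheory GRing.Theory Num.Theory.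
Import numFieldNormedType.Exports.
Local Open Scope ring_scope.

Section GNNDefs.
Variable R : realType.

Definition enorm (k : nat) (v : 'rV[R]_k) : R :=
  Num.sqrt (\sum_(j < k) v 0 j ^+ 2).
Definition fnorm (m k : nat) (A : 'M[R]_(m, k)) : R :=
  Num.sqrt (\sum_(i < m) \sum_(j < k) A i j ^+ 2).

(* Graph structures: an abstract type [Gr] of graphs G = (V, E), each with
   [nn G] nodes; features X : 'M_(nn G, D) (row i is x_i). *)
Variables (Gr : Type) (nn : Gr -> nat) (D : nat).

Definition GNN (k : nat) := forall G : Gr, 'M[R]_(nn G, D) -> 'I_(nn G) -> 'rV[R]_k.

Definition pert (n : nat) (X : 'M[R]_(n, D)) (i : 'I_n) (tau : R) (w : 'rV[R]_D)
  : 'M[R]_(n, D) :=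
  \matrix_(k, j) (X k j + (if k == i then tau * w 0 j else 0)).

Record query := Query {
  qG : Gr; qX : 'M[R]_(nn qG, D); qi : 'I_(nn qG); qw : 'rV[R]_D }.

(* t is in Q (feasible = in the support of the graph distribution, unit w). *)
Definition in_Q (feas : forall G : Gr, 'M[R]_(nn G, D) -> Prop) (t : query) :=
  feas (qG t) (qX t) /\ enorm (qw t) = 1.

Definition grad (k : nat) (F : GNN k) (t : query) : 'rV[R]_k :=
  derive1 (fun tau : R => F (qG t) (pert (qX t) (qi t) tau (qw t)) (qi t)) 0.

Definition stationary feas (k : nat) (F : GNN k) (t : query) :=
  in_Q feas t /\ enorm (grad F t) = 0.

Definition qF (delta : R) (k : nat) (F : GNN k) (t : query) : R :=
  enorm (F (qG t) (pert (qX t) (qi t) delta (qw t)) (qi t) - F (qG t) (qX t) (qi t))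
  / enorm (F (qG t) (qX t) (qi t)).

Definition near_feas feas (delta : R) (G : Gr) (X : 'M[R]_(nn G, D)) :=
  exists X0 : 'M[R]_(nn G, D), feas G X0 /\ fnorm (X - X0) <= delta.

Definition surrogate feas (delta eps : R) (k k' : nat) (M : GNN k) (M' : GNN k')
  (phi : 'rV[R]_k -> 'rV[R]_k') :=
  exists hhat : GNN k, forall G (X : 'M[R]_(nn G, D)), near_feas feas delta X ->
    forall i, enorm (hhat G X i - M G X i) <= eps /\ M' G X i = phi (hhat G X i).

(* beta_F = E_{mu_M} q_F / E_{D_exp} q_F, where mu_M is the law of dec1 under mu
   and D_exp is the law of dec2 under P. *)
Definition beta (delta : R) (k : nat) (F : GNN k)
  (d1 : measure_display) (Q1 : measurableType d1) (mu : probability Q1 R)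
  (dec1 : Q1 -> query)
  (d2 : measure_display) (Q2 : measurableType d2) (P : probability Q2 R)
  (dec2 : Q2 -> query) : R :=
  fine (\int[mu]_t (qF delta F (dec1 t))%:E)%E
  / fine (\int[P]_t (qF delta F (dec2 t))%:E)%E.

(* h_i(G, X; M) is twice differentiable in X with bounded Hessian:
   Frechet differentiable in X, twice differentiable along every line
   X + tau V, with second directional derivatives bounded by H |V|_F^2. *)
Definition twice_diff_bdd_hessian (k : nat) (M : GNN k) :=
  (forall G (j : 'I_(nn G)) (X : 'M[R]_(nn G, D)),
     differentiable (fun Y : 'M[R]_(nn G, D) => M G Y j) X) /\
  exists H : R, forall G (X V : 'M[R]_(nn G, D)) (j : 'I_(nn G)),
    let g := fun tau : R => M G (X + tau *: V) j in
    (forall tau, derivable g tau 1 /\ derivable (derive1 g) tau 1) /\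
    (forall tau, enorm (derive1 (derive1 g) tau) <= H * fnorm V ^+ 2).

Definition bilipschitz (k k' : nat) (c C : R) (phi : 'rV[R]_k -> 'rV[R]_k') :=
  forall v1 v2 : 'rV[R]_k,
    c * enorm (v1 - v2) <= enorm (phi v1 - phi v2) <= C * enorm (v1 - v2).

End GNNDefs.

(* Main.v *)
Require Import Defs.
From HB Require Import structures.
From mathcomp Require Import all_boot all_order all_algebra.
From mathcomp Require Import all_classical all_reals all_analysis.
From mathcomp Require Import ring lra measurable_realfun.
Import Order.TTheory GRing.Theory Num.Theory.
Import numFieldNormedType.Exports.
Local Open Scope classical_set_scope.
Local Open Scope ring_scope.

Section Enorm.
Variable R : realType.
Variable k : nat.
Implicit Types u v : 'rV[R]_k.

Lemma sumsq_ge0 v : 0 <= \sum_(j < k) v 0 j ^+ 2.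
Proof. by apply: sumr_ge0 => j _; rewrite sqr_ge0. Qed.

Lemma enorm_ge0 v : 0 <= enorm v.
Proof. exact: sqrtr_ge0. Qed.

Lemma enorm_sq v : enorm v ^+ 2 = \sum_(j < k) v 0 j ^+ 2.
Proof. by rewrite /enorm sqr_sqrtr // sumsq_ge0. Qed.

Lemma enormZ (s : R) v : enorm (s *: v) = `|s| * enorm v.
Proof.
rewrite /enorm (eq_bigr (fun j => s ^+ 2 * v 0 j ^+ 2)); last first.
  by move=> j _; rewrite mxE exprMn.
by rewrite -mulr_sumr sqrtrM ?sqr_ge0 // sqrtr_sqr.
Qed.

Lemma enormN v : enorm (- v) = enorm v.
Proof. by rewrite -scaleN1r enormZ normrN normr1 mul1r. Qed.

Lemma enormB u v : enorm (u - v) = enorm (v - u).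
Proof. by rewrite -enormN opprB. Qed.

Lemma enorm0 : enorm (0 : 'rV[R]_k) = 0.
Proof. by rewrite -(scale0r (0 : 'rV[R]_k)) enormZ normr0 mul0r. Qed.

Lemma coord_le_enorm v j : `|v 0 j| <= enorm v.
Proof.
rewrite -sqrtr_sqr /enorm ler_sqrt ?sumsq_ge0 //.
rewrite (bigD1 j) //= lerDl; apply: sumr_ge0 => i _; exact: sqr_ge0.
Qed.

Lemma enorm_le_l1 v : enorm v <= \sum_(j < k) `|v 0 j|.
Proof.
rewrite -(ger0_norm (sumr_ge0 _ (fun j _ => normr_ge0 (v 0 j)))).
rewrite -sqrtr_sqr /enorm ler_sqrt ?sqr_ge0 //.
have -> : \sum_(j < k) v 0 j ^+ 2 = \sum_(j < k) `|v 0 j| ^+ 2.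
  by apply: eq_bigr => j _; rewrite real_normK // num_real.
rewrite expr2 mulr_suml; apply: ler_sum => i _.
rewrite mulr_sumr (bigD1 i) //= lerDl; apply: sumr_ge0 => j _.
by rewrite mulr_ge0.
Qed.


Lemma enorm_eq0 v : enorm v = 0 -> forall j, v 0 j = 0.
Proof.
move=> h j; apply/eqP; rewrite -normr_eq0 eq_le normr_ge0 andbT -h.
exact: coord_le_enorm.
Qed.

Lemma cauchy_schwarz u v : \sum_(j < k) u 0 j * v 0 j <= enorm u * enorm v.
Proof.
have [eu0|eu0] := eqVneq (enorm u) 0.
  rewrite eu0 mul0r big1 // => j _; by rewrite (@enorm_eq0 u eu0) mul0r.
have [ev0|ev0] := eqVneq (enorm v) 0.
  rewrite ev0 mulr0 big1 // => j _; by rewrite (@enorm_eq0 v ev0) mulr0.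
have eup : 0 < enorm u by rewrite lt_def eu0 enorm_ge0.
have evp : 0 < enorm v by rewrite lt_def ev0 enorm_ge0.
have H : 0 <= \sum_(j < k) (u 0 j * enorm v - v 0 j * enorm u) ^+ 2.
  by apply: sumr_ge0 => j _; exact: sqr_ge0.
have E : \sum_(j < k) (u 0 j * enorm v - v 0 j * enorm u) ^+ 2 =
   enorm v ^+ 2 * \sum_(j < k) u 0 j ^+ 2 + enorm u ^+ 2 * \sum_(j < k) v 0 j ^+ 2
   - 2 * enorm u * enorm v * \sum_(j < k) u 0 j * v 0 j.
  rewrite !mulr_sumr -big_split -sumrB /=; apply: eq_bigr => j _; ring.
rewrite E -!enorm_sq in H.
have H2 : 0 <= (2 * enorm u * enorm v) * (enorm u * enorm v - \sum_(j < k) u 0 j * v 0 j).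
  by rewrite (le_trans H) // le_eqVlt; apply/orP; left; apply/eqP; ring.
rewrite pmulr_rge0 ?subr_ge0 in H2 => //.
by rewrite !mulr_gt0.
Qed.

Lemma enormD u v : enorm (u + v) <= enorm u + enorm v.
Proof.
rewrite -(ger0_norm (addr_ge0 (enorm_ge0 u) (enorm_ge0 v))) -sqrtr_sqr.
rewrite {1}/enorm ler_sqrt ?sqr_ge0 //.
have -> : \sum_(j < k) (u + v) 0 j ^+ 2 =
  \sum_(j < k) u 0 j ^+ 2 + \sum_(j < k) v 0 j ^+ 2 + 2 * \sum_(j < k) u 0 j * v 0 j.
  rewrite mulr_sumr -!big_split /=; apply: eq_bigr => j _; rewrite mxE; ring.
rewrite -!enorm_sq.
have := cauchy_schwarz u v; lra.
Qed.

Lemma enorm_tri3 (a b c : 'rV[R]_k) : enorm (a - c) <= enorm (a - b) + enorm (b - c).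
Proof. by rewrite (le_trans _ (enormD _ _)) // addrA subrK. Qed.

End Enorm.
Section Taylor.
Variable R : realType.

Lemma mvt_le (f : R -> R) (a b : R) : a <= b -> (forall x, derivable f x 1) ->
  exists2 c, c \in `[a, b]%R & f b - f a = derive1 f c * (b - a).
Proof.
move=> ab df; apply: MVT_segment => //.
  by move=> x _; rewrite derive1E; exact: derivableP.
apply: continuous_subspaceT => x.
exact/differentiable_continuous/derivable1_diffP.
Qed.

Lemma taylor1 (f : R -> R) (B dl : R) : 0 <= dl ->
  (forall x, derivable f x 1) -> (forall x, derivable (derive1 f) x 1) ->
  (forall x, `|derive1 (derive1 f) x| <= B) ->
  `|f dl - f 0 - dl * derive1 f 0| <= B * dl ^+ 2.
Proof.
move=> dl0 df ddf hB.
have [c c0 Ec] := @mvt_le f 0 dl dl0 df.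
have c0' : 0 <= c /\ c <= dl by move: c0; rewrite in_itv /= => /andP[].
have [e e0 Ee] := @mvt_le (derive1 f) 0 c (proj1 c0') ddf.
have B0 : 0 <= B by apply: le_trans (hB 0).
have -> : f dl - f 0 - dl * derive1 f 0 = dl * (derive1 f c - derive1 f 0).
  rewrite Ec; ring.
rewrite Ee subr0 normrM ger0_norm // normrM (ger0_norm (proj1 c0')).
rewrite expr2 mulrCA. apply: ler_pM => //.
- by rewrite mulr_ge0 // (proj1 c0').
- by rewrite ler_wpM2l // (proj2 c0').
Qed.

End Taylor.

Section TaylorVec.
Variable R : realType.
Variable k : nat.

Lemma derive1_coord (g : R -> 'rV[R]_k) (x : R) j : derivable g x 1 ->
  derive1 g x 0 j = derive1 (fun t => g t 0 j) x.
Proof. by move=> dg; rewrite !derive1E derive_mx // mxE. Qed.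

Lemma taylor_vec (g : R -> 'rV[R]_k) (B dl : R) : 0 <= dl ->
  (forall x, derivable g x 1) -> (forall x, derivable (derive1 g) x 1) ->
  (forall x, enorm (derive1 (derive1 g) x) <= B) ->
  enorm (g dl - g 0 - dl *: derive1 g 0) <= k%:R * (B * dl ^+ 2).
Proof.
move=> dl0 dg ddg hB.
apply: le_trans; first exact: enorm_le_l1.
rewrite mulr_natl -[k in _ *+ k]card_ord -sumr_const; apply: ler_sum => j _.
set f := fun t => g t 0 j.
have Ef : derive1 f = fun t => derive1 g t 0 j.
  by apply/funext => t; rewrite derive1_coord.
have df x : derivable f x 1 by move: (dg x) => /derivable_mxP; apply.
have ddf x : derivable (derive1 f) x 1.
  by rewrite Ef; move: (ddg x) => /derivable_mxP; apply.
have hf x : `|derive1 (derive1 f) x| <= B.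
  rewrite Ef -derive1_coord; last exact: ddg.
  by apply: le_trans (hB x); exact: coord_le_enorm.
rewrite !mxE -/(f dl) -/(f 0) derive1_coord // -/f.
exact: taylor1.
Qed.

End TaylorVec.

Arguments enorm_ge0 {R k}. Arguments enormZ {R k}. Arguments enormB {R k}. Arguments enormD {R k}. Arguments enorm_tri3 {R k}. Arguments enormN {R k}.
Arguments coord_le_enorm {R k}. Arguments enorm_le_l1 {R k}.

Section Integrals.
Context d (T : measurableType d) (R : realType).
Variable P : probability T R.
Local Open Scope ereal_scope.

Lemma le_integral_nm (f g : T -> \bar R) : (forall x, 0 <= f x) ->
  (forall x, f x <= g x) -> \int[P]_x f x <= \int[P]_x g x.
Proof.
move=> f0 fg.
have g0 x : 0 <= g x by apply: le_trans (fg x).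
rewrite !ge0_integralTE //.
apply: ereal_sup_le => _ [h /= hf <-]; exists h => //= x.
exact: le_trans (hf x) (fg x).
Qed.

Lemma integral_ub (f : T -> R) (b : R) : (forall x, 0 <= f x <= b)%R ->
  \int[P]_x (f x)%:E <= b%:E.
Proof.
move=> hf.
apply: (@le_trans _ _ (\int[P]_x (cst b%:E) x)).
  apply: le_integral_nm => x; rewrite lee_fin; by case/andP: (hf x).
rewrite integral_cst // [X in (_ * X)%E](_ : _ = 1%E) ?mule1 //; exact: probability_setT.
Qed.

Lemma integral_lb (L : T -> R) (q : T -> R) : measurable_fun setT L ->
  (forall x, 0 <= q x)%R -> (forall x, L x <= q x)%R ->
  \int[P]_x (L x)%:E <= \int[P]_x (q x)%:E.
Proof.
move=> mL q0 Lq.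
rewrite integralE.
apply: le_trans (_ : \int[P]_x ((EFin \o L)^\+ x) <= _).
  apply: geeDl; rewrite oppe_le0 integral_ge0 // => x _; exact: funeneg_ge0.
apply: le_integral_nm => x; first exact: funepos_ge0.
by rewrite funeposE /= ge_max !lee_fin q0 Lq.
Qed.


Lemma integral_affine (m : T -> R) (a b : R) : measurable_fun setT m ->
  (forall x, 0 <= m x <= 1)%R ->
  \int[P]_x ((a * m x - b)%:E) = a%:E * \int[P]_x (m x)%:E - b%:E.
Proof.
move=> mm m01.
have im : P.-integrable setT (EFin \o m).
  apply: (@le_integrable _ _ _ _ _ _ _ (EFin \o cst 1%R)) => //.
  - exact/measurable_EFinP.
  - move=> x _ /=; rewrite lee_fin normr1 ger0_norm; by case/andP: (m01 x).
  - exact: finite_measure_integrable_cst.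
have iam : P.-integrable setT (EFin \o (fun x => a * m x)%R).
  apply: eq_integrable measurableT _ _ _ (integrableZl measurableT a im) => x _ /=; by rewrite EFinM.
have ib : P.-integrable setT (EFin \o cst b) by exact: finite_measure_integrable_cst.
under eq_integral do rewrite EFinB.
rewrite integralB_EFin //.
under eq_integral do rewrite EFinM.
rewrite integralZl //.
rewrite integral_cst // [X in (b%:E * X)%E](_ : _ = 1%E) ?mule1 //; exact: probability_setT.
Qed.

Lemma integral_min_pos (g : T -> R) : measurable_fun setT g ->
  (forall x, 0 <= g x)%R -> 0 < \int[P]_x (g x)%:E ->
  0 < \int[P]_x (Num.min (g x) 1%R)%:E.
Proof.
move=> mg g0 gpos.
have mm : measurable_fun setT (fun x => Num.min (g x) 1%R).
  exact: (measurable_minr mg (measurable_cst _)).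
have m0 x : (0 <= Num.min (g x) 1)%R by rewrite le_min g0 ler01.
rewrite lt_def integral_ge0 ?andbT; last by move=> x _; rewrite lee_fin.
apply/negP => /eqP H.
have H' : \int[P]_x `|(EFin \o (fun x => Num.min (g x) 1%R)) x| = 0.
  rewrite -H; apply: eq_integral => x _ /=; by rewrite ger0_norm.
move/(ae_eq_integral_abs _ measurableT (iffRL (measurable_EFinP _ _) mm)): H' => H2.
have H3 : ae_eq P setT (EFin \o g) (cst 0).
  apply: filterS H2 => x h Tx; move: (h Tx) => /= [] /eqP.
  rewrite /Num.min; case: ifPn => [_ /eqP -> //|]; by rewrite oner_eq0.
move: gpos; rewrite (@ae_eq_integral _ _ _ P setT (cst 0) (EFin \o g) measurableT _ _ H3) ?integral0 ?ltxx //.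
- exact/measurable_EFinP.
Qed.

End Integrals.

Section Pointwise.
Variable R : realType.

Lemma div_le (x X y Y : R) : 0 <= x <= X -> 0 < Y <= y -> x / y <= X / Y.
Proof.
move=> /andP[x0 xX] /andP[Y0 Yy].
have y0 : 0 < y by apply: lt_le_trans Yy.
apply: ler_pM => //; first by rewrite invr_ge0 ltW.
by rewrite lef_pV2.
Qed.

Lemma div_ge (x Z y Y : R) : 0 <= x -> Z <= x -> 0 < y <= Y -> Z / Y <= x / y.
Proof.
move=> x0 Zx /andP[y0 yY].
have Y0 : 0 < Y by apply: lt_le_trans yY.
have [Z0|Z0] := leP Z 0.
  apply: le_trans (_ : 0 <= _); last by rewrite divr_ge0 // ltW.
  by rewrite pmulr_lle0 // invr_gt0.
apply: le_trans (_ : x / Y <= _).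
  by rewrite ler_pM2r // invr_gt0.
by rewrite ler_pM2l ?(lt_le_trans Z0) // lef_pV2.
Qed.

Variables (k k' : nat) (phi : 'rV[R]_k -> 'rV[R]_k') (c C : R).
Hypotheses (c0 : 0 < c) (C0 : 0 < C) (phi0 : phi 0 = 0) (bl : bilipschitz c C phi).

Lemma phi_lo v : c * enorm v <= enorm (phi v).
Proof. by have /andP[] := bl v 0; rewrite phi0 !subr0. Qed.
Lemma phi_hi v : enorm (phi v) <= C * enorm v.
Proof. by have /andP[] := bl v 0; rewrite phi0 !subr0. Qed.
Lemma phiB_lo u v : c * enorm (u - v) <= enorm (phi u - phi v).
Proof. by have /andP[] := bl u v. Qed.
Lemma phiB_hi u v : enorm (phi u - phi v) <= C * enorm (u - v).
Proof. by have /andP[] := bl u v. Qed.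

Lemma enorm_b_lo (b B : 'rV[R]_k) e alo : enorm (b - B) <= e -> alo <= enorm B ->
  alo - e <= enorm b.
Proof.
move=> hbB hB.
have := enorm_tri3 B b 0; rewrite !subr0 enormB => h; lra.
Qed.

Lemma num_pt (A B a b g : 'rV[R]_k) (dl e alo K1 : R) :
  0 <= dl -> 0 <= e -> 0 < alo -> 2 * e <= alo ->
  enorm (a - A) <= e -> enorm (b - B) <= e -> alo <= enorm B ->
  enorm (A - B - dl *: g) <= K1 * dl ^+ 2 -> enorm g = 0 ->
  enorm (phi a - phi b) / enorm (phi b) <= C * (2 * e + K1 * dl ^+ 2) / (c * (alo / 2)).
Proof.
move=> dl0 e0 alo0 e_alo haA hbB hB hT g0.
have eAB : enorm (A - B) <= K1 * dl ^+ 2.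
  have := enormD (A - B - dl *: g) (dl *: g).
  by rewrite subrK enormZ g0 mulr0 addr0 => /le_trans; apply.
have eab : enorm (a - b) <= 2 * e + K1 * dl ^+ 2.
  have := enorm_tri3 a A b; have := enorm_tri3 A B b.
  have := enormB b B; lra.
have nb : alo - e <= enorm b by exact: (@enorm_b_lo b B e alo hbB hB).
apply: div_le; apply/andP; split.
- exact: enorm_ge0.
- apply: le_trans (phiB_hi a b) _; apply: ler_wpM2l; [exact: ltW | exact: eab].
- apply: mulr_gt0 => //; lra.
- apply: le_trans (phi_lo b); apply: ler_wpM2l; [exact: ltW | lra].
Qed.

Lemma den_pt (A B a b g : 'rV[R]_k) (dl e alo K1 ahi m : R) :
  0 <= dl -> 0 <= e -> 0 < alo -> 2 * e <= alo ->
  enorm (a - A) <= e -> enorm (b - B) <= e -> alo <= enorm B -> enorm B <= ahi ->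
  enorm (A - B - dl *: g) <= K1 * dl ^+ 2 -> m <= enorm g ->
  (c / (C * (`|ahi| + alo))) * (dl * m - K1 * dl ^+ 2 - 2 * e)
  <= enorm (phi a - phi b) / enorm (phi b).
Proof.
move=> dl0 e0 alo0 e_alo haA hbB hB hBhi hT mg.
have eAB : dl * enorm g - K1 * dl ^+ 2 <= enorm (A - B).
  have := enormD (A - B - dl *: g) (- (A - B)).
  rewrite addrAC subrr add0r !enormN enormZ ger0_norm // => h; lra.
have eab : enorm (A - B) - 2 * e <= enorm (a - b).
  have := enorm_tri3 A a B; have := enorm_tri3 a b B.
  have := enormB a A; lra.
have nb : alo - e <= enorm b by exact: (@enorm_b_lo b B e alo hbB hB).
have dm : dl * m <= dl * enorm g by apply: ler_wpM2l.
rewrite (mulrC (c / _)) mulrA.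
apply: div_ge.
- exact: enorm_ge0.
- apply: le_trans (phiB_lo a b).
  rewrite mulrC; apply: ler_wpM2l; [exact: ltW | lra].
- apply/andP; split.
  + apply: lt_le_trans (phi_lo b); apply: mulr_gt0 => //; lra.
  + apply: le_trans (phi_hi b) _; apply: ler_wpM2l; first exact: ltW.
    have := enorm_tri3 b B 0; rewrite !subr0.
    have := ler_norm ahi; lra.
Qed.

End Pointwise.

Lemma ex_delta (R : realType) (f : R -> R) (rho : R) : 0 < rho ->
  f x @[x --> 0^'+] --> 0 -> exists2 d1, 0 < d1 & forall x, 0 < x < d1 -> f x <= rho.
Proof.
move=> rho0 hf.
have := @cvgr_dist_le _ _ _ (0^'+) _ f 0 hf rho rho0.
move=> /(_ (at_right_proper_filter 0)). rewrite near_withinE => /nbhs_ballP [d1 d10 Hb].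
exists d1 => // x /andP[x0 xd].
have : ball (0:R) d1 x by rewrite /ball /= sub0r normrN gtr0_norm.
move=> /Hb /(_ x0); rewrite sub0r normrN => h.
exact: le_trans (ler_norm _) h.
Qed.


Section GNNLemmas.
Variables (R : realType) (Gr : Type) (nn : Gr -> nat) (D : nat).

Definition Vmat {n} (i : 'I_n) (w : 'rV[R]_D) : 'M[R]_(n, D) :=
  \matrix_(kk, j) (if kk == i then w 0 j else 0).

Lemma pertE n (X : 'M[R]_(n, D)) i tau w : pert X i tau w = X + tau *: Vmat i w.
Proof.
apply/matrixP => kk j; rewrite !mxE; case: ifP => _ //.
by rewrite mulr0 addr0.
Qed.

Lemma fnormZ n (s : R) (A : 'M[R]_(n, D)) : fnorm (s *: A) = `|s| * fnorm A.
Proof.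
rewrite /fnorm (eq_bigr (fun i => s ^+ 2 * \sum_(j < D) A i j ^+ 2)); last first.
  by move=> i _; rewrite mulr_sumr; apply: eq_bigr => j _; rewrite mxE exprMn.
rewrite -mulr_sumr sqrtrM ?sqr_ge0 // sqrtr_sqr //.
Qed.

Lemma fnormV n (i : 'I_n) w : fnorm (Vmat i w) = enorm w.
Proof.
rewrite /fnorm /enorm (bigD1 i) //=.
rewrite [X in _ + X]big1 ?addr0.
  by apply: congr1; apply: eq_bigr => j _; rewrite mxE eqxx.
move=> kk /negbTE nk; apply: big1 => j _; by rewrite mxE nk expr0n.
Qed.

Lemma near_feas_pert feas dl G (X : 'M[R]_(nn G, D)) i w :
  feas G X -> enorm w = 1 -> 0 <= dl -> near_feas feas dl (pert X i dl w).
Proof.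
move=> fX hw dl0; exists X; split => //.
by rewrite pertE addrAC subrr add0r fnormZ fnormV hw mulr1 ger0_norm.
Qed.

Lemma near_feas_self feas dl G (X : 'M[R]_(nn G, D)) :
  feas G X -> 0 <= dl -> near_feas feas dl X.
Proof.
move=> fX dl0; exists X; split => //.
rewrite subrr /fnorm big1 ?sqrtr0 // => kk _; apply: big1 => j _.
by rewrite mxE expr0n.
Qed.


Lemma taylor_M (d : nat) (M : GNN R nn D d) (H : R) :
  (forall G (X V : 'M[R]_(nn G, D)) (j : 'I_(nn G)),
    let g := fun tau : R => M G (X + tau *: V) j in
    (forall tau, derivable g tau 1 /\ derivable (derive1 g) tau 1) /\
    (forall tau, enorm (derive1 (derive1 g) tau) <= H * fnorm V ^+ 2)) ->
  forall (t : query R nn D) (dl : R), enorm (qw t) = 1 -> 0 <= dl ->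
  enorm (M (qG t) (pert (qX t) (qi t) dl (qw t)) (qi t) - M (qG t) (qX t) (qi t)
         - dl *: grad M t) <= (d%:R * `|H|) * dl ^+ 2.
Proof.
move=> hH [G X i w] dl /= hw dl0.
rewrite /grad /=.
set V := Vmat i w.
have [hd hb] := hH G X V i.
set g := fun tau : R => M G (X + tau *: V) i.
have Eg : (fun tau : R => M G (pert X i tau w) i) = g.
  by apply/funext => tau; rewrite pertE.
have E0 : M G X i = g 0 by rewrite /g scale0r addr0.
rewrite Eg E0 pertE -/(g dl) -mulrA.
apply: taylor_vec => //.
- by move=> x; case: (hd x).
- by move=> x; case: (hd x).
- move=> x; apply: le_trans (hb x) _.
  by rewrite /V fnormV hw expr1n mulr1 ler_norm.
Qed.

End GNNLemmas.

Theorem lemma3 (R : realType) (Gr : Type) (nn : Gr -> nat) (D d : nat)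
  (feas : forall G : Gr, 'M[R]_(nn G, D) -> Prop)
  (M : GNN R nn D d)
  (d1 : measure_display) (Q1 : measurableType d1) (mu : probability Q1 R)
  (dec1 : Q1 -> query R nn D)
  (d2 : measure_display) (Q2 : measurableType d2) (P : probability Q2 R)
  (dec2 : Q2 -> query R nn D)
  (alo ahi : R) :
  twice_diff_bdd_hessian M ->
  0 < alo ->
  (forall G (X : 'M[R]_(nn G, D)) (i : 'I_(nn G)), feas G X ->
     alo <= enorm (M G X i) <= ahi) ->
  (* mu_M is a probability measure on S(M) *)
  (forall t, stationary feas M (dec1 t)) ->
  (* D_exp is a probability measure on the query tuples Q *)
  (forall t, in_Q feas (dec2 t)) ->
  measurable_fun setT (fun t => enorm (grad M (dec2 t))) ->
  (0 < \int[P]_t (enorm (grad M (dec2 t)))%:E)%E ->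
  exists K : R, 0 < K /\
  forall eps : R -> R,
    (forall delta, 0 <= eps delta) ->
    (eps x / x) @[x --> 0^'+] --> 0 ->
  exists delta0 : R, 0 < delta0 /\
  forall (delta c C : R) (d' : nat) (phi : 'rV[R]_d -> 'rV[R]_d')
         (M' : GNN R nn D d'),
    0 < delta < delta0 -> 0 < c -> 0 < C ->
    phi 0 = 0 -> bilipschitz c C phi ->
    surrogate feas delta (eps delta) M M' phi ->
    beta delta M' mu dec1 P dec2
      <= K * (C / c) ^+ 2 * Num.max (eps delta / delta) delta.
Proof.
move=> [_ [H hH]] alo0 hfeas hstat hQ mgr gpos.
set g2 := fun t => enorm (grad M (dec2 t)).
set m := fun t => Num.min (g2 t) 1.
have g20 t : 0 <= g2 t by exact: enorm_ge0.
have m01 t : 0 <= m t <= 1 by rewrite le_min g20 ler01 ge_min lexx orbT.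
have mm : measurable_fun setT m := measurable_minr mgr (measurable_cst _).
have mpos : (0 < \int[P]_x (m x)%:E)%E := @integral_min_pos _ _ _ P _ mgr g20 gpos.
have mle1 : (\int[P]_x (m x)%:E <= 1%:E)%E := @integral_ub _ _ _ P _ _ m01.
set gm := fine (\int[P]_x (m x)%:E).
have Egm : (\int[P]_x (m x)%:E = gm%:E)%E.
  rewrite /gm fineK // ge0_fin_numE ?(ltW mpos) //.
  exact: le_lt_trans mle1 (ltry _).
have gm0 : 0 < gm by rewrite -lte_fin -Egm.
have gm1 : gm <= 1 by rewrite -lee_fin -Egm.
set K1 := d%:R * `|H|.
have K10 : 0 <= K1 by rewrite mulr_ge0.
set A2 := `|ahi| + alo.
have A20 : 0 < A2 by rewrite /A2 ltr_wpDl.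
exists (4 * A2 * (2 + K1) / (alo * gm)); split.
  by rewrite divr_gt0 ?mulr_gt0 // ltr_wpDr.
move=> eps eps0 epslim.
set rho := Num.min (alo / 2) (gm / 8).
have rho0 : 0 < rho by rewrite lt_min !divr_gt0.
have [dl1 dl10 hdl1] := @ex_delta _ _ _ rho0 epslim.
exists (Num.min dl1 (gm / (4 * K1 + 4))); split.
  by rewrite lt_min dl10 divr_gt0 // ltr_wpDl // mulr_ge0.
move=> dl c C d' phi M' /andP[dl0 dlm] c0 C0 phi0 bl [hhat hs].
have dl_1 : dl < dl1 by move: dlm; rewrite lt_min => /andP[].
have dl_2 : dl < gm / (4 * K1 + 4) by move: dlm; rewrite lt_min => /andP[].
set e := eps dl.
have e0 : 0 <= e := eps0 dl.
have erat : e / dl <= rho by apply: hdl1; rewrite dl0 dl_1.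
have edl : e <= rho * dl by rewrite -ler_pdivrMr.
have rho_alo : rho <= alo / 2 by rewrite ge_min lexx.
have rho_gm : rho <= gm / 8 by rewrite ge_min lexx orbT.
have K14 : 0 < 4 * K1 + 4 by rewrite ltr_wpDl // mulr_ge0.
have dlK : dl * (4 * K1 + 4) < gm by rewrite -ltr_pdivlMr.
have dl1' : dl <= 1.
  have : dl * 4 <= dl * (4 * K1 + 4).
    by apply: ler_wpM2l; [exact: ltW | rewrite lerDr mulr_ge0].
  lra.
have rdl : rho * dl <= rho by rewrite ler_piMr // ltW.
have e_alo : 2 * e <= alo by lra.
have rdl2 : rho * dl <= gm * dl / 8.
  by rewrite mulrAC; apply: ler_wpM2r; [exact: ltW|].
have e_gm : 2 * e <= gm * dl / 4 by lra.
have K1dl : K1 * dl ^+ 2 <= gm * dl / 4.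
  have h1 : K1 * dl * 4 <= gm.
    apply: le_trans (ltW dlK).
    have -> : dl * (4 * K1 + 4) = K1 * dl * 4 + 4 * dl by ring.
    by rewrite lerDl mulr_ge0 // ltW.
  have h2 : K1 * dl * 4 * dl <= gm * dl by apply: ler_wpM2r => //; exact: ltW.
  have -> : K1 * dl ^+ 2 = K1 * dl * 4 * dl / 4 by field.
  by rewrite ler_pM2r.
set Nb := C * (2 * e + K1 * dl ^+ 2) / (c * (alo / 2)).
have numb t : 0 <= qF dl M' (dec1 t) <= Nb.
  case: (hstat t) => [[fX hw] gr0].
  move: fX hw gr0; case: (dec1 t) => G X i w /= fX hw gr0.
  have [hA1 hA2] := hs G _ (@near_feas_pert R Gr nn D feas dl G X i w fX hw (ltW dl0)) i.
  have [hB1 hB2] := hs G X (@near_feas_self R Gr nn D feas dl G X fX (ltW dl0)) i.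
  have /andP[hlo hhi] := hfeas G X i fX.
  rewrite /qF /= hA2 hB2; apply/andP; split.
    by rewrite divr_ge0 // enorm_ge0.
  have hT := (@taylor_M R Gr nn D d M H hH (Query X i w) dl hw (ltW dl0)).
  have h := @num_pt R d d' phi c C c0 C0 phi0 bl _ _ _ _ _ dl e alo K1 (ltW dl0) e0 alo0 e_alo hA1 hB1 hlo hT gr0.
  exact: h.
have Nint := @integral_ub _ _ _ mu _ _ numb.
have Nint0 : (0 <= \int[mu]_x (qF dl M' (dec1 x))%:E)%E.
  by apply: integral_ge0 => x _; rewrite lee_fin; case/andP: (numb x).
have Nfin : (\int[mu]_x (qF dl M' (dec1 x))%:E)%E \is a fin_num.
  by rewrite ge0_fin_numE // (le_lt_trans Nint) // ltry.
set fN := fine (\int[mu]_x (qF dl M' (dec1 x))%:E)%E.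
have fN0 : 0 <= fN by rewrite -lee_fin /fN fineK.
have fNb : fN <= Nb by rewrite -lee_fin /fN fineK.
set kap := c / (C * A2).
have kap0 : 0 < kap by rewrite divr_gt0 // mulr_gt0.
set a := kap * dl.
set b := kap * (K1 * dl ^+ 2 + 2 * e).
have denb t : a * m t - b <= qF dl M' (dec2 t).
  case: (hQ t) => fX hw.
  have mg : m t <= g2 t by rewrite ge_min lexx.
  move: fX hw mg; rewrite /g2; case: (dec2 t) => G X i w /= fX hw mg.
  have [hA1 hA2] := hs G _ (@near_feas_pert R Gr nn D feas dl G X i w fX hw (ltW dl0)) i.
  have [hB1 hB2] := hs G X (@near_feas_self R Gr nn D feas dl G X fX (ltW dl0)) i.
  have /andP[hlo hhi] := hfeas G X i fX.
  rewrite /qF /= hA2 hB2.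
  have := (@den_pt R d d' phi c C c0 C0 phi0 bl _ _ _ _ _ dl e alo K1 ahi (m t) (ltW dl0) e0 alo0 e_alo hA1 hB1 hlo hhi
    (@taylor_M R Gr nn D d M H hH (Query X i w) dl hw (ltW dl0)) mg).
  rewrite -/A2 -/kap /a /b => h; apply: le_trans h; rewrite le_eqVlt; apply/orP; left.
  apply/eqP; ring.
have qF0 t : 0 <= qF dl M' (dec2 t) by rewrite divr_ge0 // enorm_ge0.
have mL : measurable_fun setT (fun t => a * m t - b).
  apply: measurable_funB; last exact: measurable_cst.
  by apply: measurable_funM => //; exact: measurable_cst.
have Dint := @integral_lb _ _ _ P _ _ mL qF0 denb.
rewrite (@integral_affine _ _ _ P m a b mm m01) Egm -EFinM -EFinB in Dint.
set Db := kap * dl * gm / 2.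
have Db0 : 0 < Db.
  rewrite /Db; apply: divr_gt0 => //; apply: mulr_gt0 => //; exact: mulr_gt0.
have Dab : Db <= a * gm - b.
  rewrite /Db /a /b -subr_ge0.
  have -> : kap * dl * gm - kap * (K1 * dl ^+ 2 + 2 * e) - kap * dl * gm / 2
    = kap * (dl * gm / 2 - K1 * dl ^+ 2 - 2 * e) by field.
  apply: mulr_ge0; first exact: ltW.
  have -> : dl * gm / 2 = gm * dl / 4 + gm * dl / 4 by field.
  lra.
have mx0 : 0 < Num.max (e / dl) dl by rewrite lt_max dl0 orbT.
have K0 : 0 < 4 * A2 * (2 + K1) / (alo * gm) by rewrite divr_gt0 ?mulr_gt0 // ltr_wpDr.
rewrite /beta -/fN.
set IP := (\int[P]_x (qF dl M' (dec2 x))%:E)%E.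
have [IPoo|IPnoo] := eqVneq IP +oo%E.
  rewrite IPoo /= invr0 mulr0.
  by apply: mulr_ge0; [apply: mulr_ge0; [exact: ltW | exact: sqr_ge0] | exact: ltW].
have IPfin : IP \is a fin_num.
  rewrite fin_numE IPnoo andbT; apply/negP => /eqP IPno.
  by move: Dint; rewrite -/IP IPno leeNy_eq.
have fDb : Db <= fine IP.
  by rewrite -lee_fin fineK // (le_trans _ Dint) // lee_fin.
apply: le_trans (_ : Nb / Db <= _).
  apply: div_le; apply/andP; split => //.
set Q := (C / c) ^+ 2 * (4 * A2 / (alo * gm)).
have Q0 : 0 <= Q by rewrite mulr_ge0 ?sqr_ge0 // divr_ge0 ?mulr_ge0 // ltW.
have -> : Nb / Db = Q * (2 * (e / dl) + K1 * dl).
  rewrite /Nb /Db /kap /Q; field.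
  by rewrite (gt_eqF dl0) (gt_eqF gm0) (gt_eqF alo0) (gt_eqF c0) (gt_eqF A20) (gt_eqF C0).
rewrite [X in _ <= X](_ : _ = Q * ((2 + K1) * Num.max (e / dl) dl)); last first.
  rewrite /Q; field.
  by rewrite (gt_eqF gm0) (gt_eqF alo0) (gt_eqF c0).
apply: ler_wpM2l => //.
have h1 : e / dl <= Num.max (e / dl) dl by rewrite le_max lexx.
have h2 : dl <= Num.max (e / dl) dl by rewrite le_max lexx orbT.
have h3 : K1 * dl <= K1 * Num.max (e / dl) dl by apply: ler_wpM2l.
lra.
Qed.
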